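(* Consider the algorithm CAB described in the context under the $\gamma$-gap assumption, and let $i_t$ be the user served at round $t$. Suppose $|\boldsymbol{u}_j^\top\boldsymbol{x}-\boldsymbol{w}_{j,t-1}^\top\boldsymbol{x}|\le\mathrm{CB}_{j,t-1}(\boldsymbol{x})$ for all $j\in\mathcal U$ and all $\boldsymbol{x}\in\mathbb R^d$. Let $\boldsymbol{x}^o\in\mathbb R^d$ be fixed and suppose $\mathrm{CB}_{j,t-1}(\boldsymbol{x}^o)<\gamma/4$ for all $j\in\mathcal U$. Then $\widehat N_{i_t,t}(\boldsymbol{x}^o)=N_{i_t}(\boldsymbol{x}^o)$.
   Context: Model. Users $\mathcal U=\{1,\dots,n\}$ with unknown unit vectors $\boldsymbol{u}_i\in\mathbb R^d$; $N_i(\boldsymbol{x})=\{j:\boldsymbol{u}_j^\top\boldsymbol{x}=\boldsymbol{u}_i^\top\boldsymbol{x}\}$. $\gamma$-gap assumption ($\gamma>0$): for all $\boldsymbol{x}$ and $i,i'$, either $\boldsymbol{u}_i^\top\boldsymbol{x}=\boldsymbol{u}_{i'}^\top\boldsymbol{x}$ or $|\boldsymbol{u}_i^\top\boldsymbol{x}-\boldsymbol{u}_{i'}^\top\boldsymbol{x}|\ge\gamma$. Algorithm CAB maintains, for each user $j$, a matrix $M_{j,s}$ (starting at $I_d$) and vector $\boldsymbol{b}_{j,s}$ (starting at $\boldsymbol0$), with $\boldsymbol{w}_{j,s}=M_{j,s}^{-1}\boldsymbol{b}_{j,s}$ and $\mathrm{CB}_{j,s}(\boldsymbol{x})=\alpha(s)\sqrt{\boldsymbol{x}^\top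 M_{j,s}^{-1}\boldsymbol{x}}$ for a positive function $\alpha$. At round $t$, for any $\boldsymbol{x}$ the estimated neighborhood of the served user $i_t$ is $\widehat N_{i_t,t}(\boldsymbol{x})=\{j\in\mathcal U:|\boldsymbol{w}_{i_t,t-1}^\top\boldsymbol{x}-\boldsymbol{w}_{j,t-1}^\top\boldsymbol{x}|\le\mathrm{CB}_{i_t,t-1}(\boldsymbol{x})+\mathrm{CB}_{j,t-1}(\boldsymbol{x})\}$. *)

(* Defs.v *)
(* Real scalars: an arbitrary real closed field R (needed for Num.sqrt). *)
From HB Require Import structures.
From mathcomp Require Import all_boot all_order all_algebra.
Set Implicit Arguments. Unset Strict Implicit. Unset Printing Implicit Defensive.
Import Order.TTheory GRing.Theory Num.Theory.
Local Open Scope ring_scope.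

Section CAB.
Variables (R : rcfType) (d : nat).

Definition dotv (u x : 'cV[R]_d) : R := (u^T *m x) 0 0.

Definition unit_vec (u : 'cV[R]_d) : Prop := dotv u u = 1.

(* history of a user: a sequence of (context, payoff) pairs used in its updates *)
Definition Mmat (h : seq ('cV[R]_d * R)) : 'M[R]_d :=
  1%:M + \sum_(p <- h) (p.1 *m p.1^T).
Definition bvec (h : seq ('cV[R]_d * R)) : 'cV[R]_d :=
  \sum_(p <- h) (p.2 *: p.1).
Definition west (h : seq ('cV[R]_d * R)) : 'cV[R]_d :=
  invmx (Mmat h) *m bvec h.
Definition CB (a : R) (h : seq ('cV[R]_d * R)) (x : 'cV[R]_d) : R :=
  a * Num.sqrt (dotv x (invmx (Mmat h) *m x)).

Variable n : nat.

Definition Nb (u : 'I_n -> 'cV[R]_d) (i : 'I_n) (x : 'cV[R]_d) : {set 'I_n} :=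
  [set j | dotv (u j) x == dotv (u i) x].

Definition gamma_gap (u : 'I_n -> 'cV[R]_d) (gamma : R) : Prop :=
  0 < gamma /\ forall (x : 'cV[R]_d) (i i' : 'I_n),
    dotv (u i) x = dotv (u i') x \/ gamma <= `|dotv (u i) x - dotv (u i') x|.

(* estimated neighborhood at round t, built from the statistics of round t-1;
   hist s j = the data (contexts, payoffs) defining M_{j,s} and b_{j,s} *)
Definition Nhat (alpha : nat -> R) (hist : nat -> 'I_n -> seq ('cV[R]_d * R))
  (t : nat) (it : 'I_n) (x : 'cV[R]_d) : {set 'I_n} :=
  [set j | `|dotv (west (hist t.-1 it)) x - dotv (west (hist t.-1 j)) x|
           <= CB (alpha t.-1) (hist t.-1 it) x + CB (alpha t.-1) (hist t.-1 j) x].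

End CAB.

(* Main.v *)
Require Import Defs.
From HB Require Import structures.
From mathcomp Require Import all_boot all_order all_algebra.
From mathcomp Require Import ring lra.
Import Order.TTheory GRing.Theory Num.Theory.
Local Open Scope ring_scope.

Theorem lemma5 (R : rcfType) (d n : nat) (u : 'I_n -> 'cV[R]_d) (gamma : R)
  (alpha : nat -> R) (hist : nat -> 'I_n -> seq ('cV[R]_d * R))
  (t : nat) (it : 'I_n) (xo : 'cV[R]_d) :
  (forall j, unit_vec (u j)) ->
  gamma_gap u gamma ->
  (forall s, 0 < alpha s) ->
  (forall (j : 'I_n) (x : 'cV[R]_d),
     `|dotv (u j) x - dotv (west (hist t.-1 j)) x| <= CB (alpha t.-1) (hist t.-1 j) x) ->
  (forall j : 'I_n, CB (alpha t.-1) (hist t.-1 j) xo < gamma / 4) ->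
  Nhat alpha hist t it xo = Nb u it xo.
Proof.
move=> _ [gpos gap] _ Hc Hs.
apply/setP => j; rewrite !inE.
set ai := dotv (u it) xo; set aj := dotv (u j) xo.
set wi := dotv (west (hist t.-1 it)) xo; set wj := dotv (west (hist t.-1 j)) xo.
set ci := CB (alpha t.-1) (hist t.-1 it) xo; set cj := CB (alpha t.-1) (hist t.-1 j) xo.
have Hi : `|ai - wi| <= ci by exact: Hc.
have Hj : `|aj - wj| <= cj by exact: Hc.
have Si : ci < gamma / 4 by exact: Hs.
have Sj : cj < gamma / 4 by exact: Hs.
apply/idP/idP.
- move=> H.
  case: (gap xo j it) => [E|G]; first by apply/eqP.
  exfalso.
  have T : `|aj - ai| <= `|aj - wj| + `|wj - wi| + `|wi - ai|.
    have -> : aj - ai = (aj - wj) + (wj - wi) + (wi - ai) by ring.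
    apply: (le_trans (ler_normD _ _)); rewrite lerD2r; exact: ler_normD.
  have E1 : `|wj - wi| = `|wi - wj| by rewrite distrC.
  have E2 : `|wi - ai| = `|ai - wi| by rewrite distrC.
  rewrite E1 E2 in T.
  have : gamma < gamma by lra.
  by rewrite ltxx.
- move/eqP => E.
  have T : `|wi - wj| <= `|wi - ai| + `|ai - aj| + `|aj - wj|.
    have -> : wi - wj = (wi - ai) + (ai - aj) + (aj - wj) by ring.
    apply: (le_trans (ler_normD _ _)); rewrite lerD2r; exact: ler_normD.
  have Z : `|ai - aj| = 0 by rewrite -/aj E subrr normr0.
  have E2 : `|wi - ai| = `|ai - wi| by rewrite distrC.
  lra.
Qed.
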